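(* Let $q$ be a prime power with $q\equiv 3\pmod 4$ and $q=2m+1$. Let $a,b\in D_1^2$ with $ab=1$, and let $M=\begin{pmatrix}1&a\\ b&1\end{pmatrix}$. Then the $2\times 2$ block matrix whose $(i,j)$ block is $C_{M_{ij}}$ (that is, $\begin{pmatrix}C_1&C_a\\ C_b&C_1\end{pmatrix}$) is the adjacency matrix of a directed strongly regular graph with parameters $(2(2m+1),\ 2m,\ m,\ m-1,\ m)$.
   Context: Fix a primitive element $\gamma$ of $\mathbb{F}_q$; $D_i^e=\gamma^i\langle\gamma^e\rangle$ ($e\mid q-1$) are the cyclotomic classes, here with $e=2$ ($D_1^2$ = quadratic nonresidues). For $\sigma\in\mathbb{F}_q^*$, $C_\sigma$ is the $q\times q$ $0$-$1$ matrix with rows and columns indexed by $\mathbb{F}_q$ and $(C_\sigma)_{x,y}=1$ iff $x\in\sigma y+D_0^e$. A directed strongly regular graph with parameters $(v,k,t,\lambda,\mu)$ is a digraph (no loops, no multiple arcs) on $v$ vertices whose adjacency matrix $A$ satisfies $A^2=tI+\lambda A+\mu(J-I-A)$ and $AJ=JA=kJ$. *)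

(* Defs.v *)
From HB Require Import structures.
From mathcomp Require Import all_boot all_order all_algebra all_field.
Set Implicit Arguments. Unset Strict Implicit. Unset Printing Implicit Defensive.
Import Order.TTheory GRing.Theory Num.Theory.
Local Open Scope ring_scope.

(* Cyclotomic class D_i^e = gamma^i <gamma^e> in F_q^*.  The subgroup
   <gamma^e> = { gamma^(e k) : k in N }; since gamma has order q-1, the
   exponents k < q already give all of it. *)
Definition cycl_class (F : finFieldType) (gamma : F) (i e : nat) : {set F} :=
  [set x | [exists k : 'I_#|F|, x == gamma ^+ (i + e * k)]].

(* C_sigma: rows/columns indexed by F (via the enumeration 'I_#|F| ~ F),
   (C_sigma)_{x,y} = 1 iff x \in sigma*y + D_0^e, i.e. x - sigma*y \in D_0^e. *)
Definition Cmat (F : finFieldType) (gamma : F) (e : nat) (sigma : F)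
  : 'M[int]_#|F| :=
  \matrix_(i, j) (enum_val i - sigma * enum_val j \in cycl_class gamma 0 e)%:R.

(* Directed strongly regular graph with parameters (v,k,t,lambda,mu):
   A is the adjacency matrix of a digraph without loops or multiple arcs
   (0-1 matrix with zero diagonal) on v vertices with
   A^2 = tI + lambda A + mu (J - I - A) and AJ = JA = kJ. *)
Definition is_dsrg (n : nat) (A : 'M[int]_n) (v k t lam mu : nat) : Prop :=
  let J := const_mx 1 : 'M[int]_n in
  [/\ n = v,
      forall i j, A i j = 0 \/ A i j = 1,
      forall i, A i i = 0,
      A *m A = t%:R%:M + lam%:R *: A + mu%:R *: (J - 1%:M - A)
    & A *m J = k%:R *: J /\ J *m A = k%:R *: J].

(* Main.v *)
Require Import Defs.
From HB Require Import structures.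
From mathcomp Require Import all_boot all_order all_algebra all_field.
From mathcomp Require Import ring zify.
Import GRing.Theory.
Local Open Scope ring_scope.

Set Implicit Arguments. Unset Strict Implicit.

Lemma sqX (F : finFieldType) (gamma : F) (j : nat) :
  (#|F|.-1).-primitive_root gamma -> ~~ odd #|F|.-1 ->
  (gamma ^+ j \in cycl_class gamma 0 2) = ~~ odd j.
Proof.
move=> pr ev.
have n0 := prim_order_gt0 pr.
have oddm : forall i, odd (i %% #|F|.-1) = odd i.
  by move=> i; apply: odd_mod; apply/negbTE.
rewrite inE; apply/existsP/idP.
- case=> k /eqP e.
  have := eq_prim_root_expr pr j (0 + 2 * k); rewrite -e eqxx => /esym /eqP h.
  by rewrite -oddm h oddm add0n oddM.
- move=> ej.
  have lt: ((j %% #|F|.-1)./2 < #|F|)%N.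
    rewrite ltn_half_double -addnn; have := ltn_pmod j n0; lia.
  exists (Ordinal lt); apply/eqP; rewrite /= add0n mul2n.
  rewrite -(expr_mod _ (prim_expr_order pr)).
  by rewrite even_halfK // oddm.
Qed.

Lemma nz_pow (F : finFieldType) (gamma : F) (t : F) :
  (#|F|.-1).-primitive_root gamma -> t != 0 -> exists j : nat, t = gamma ^+ j.
Proof.
move=> pr t0.
have h : t ^+ #|F|.-1 = 1.
  have := expf_card t. rewrite -(ltn_predK (finNzRing_gt1 F)) exprS.
  move=> e; apply: (mulfI t0); by rewrite mulr1.
by case: (prim_rootP pr h) => i ->; exists i.
Qed.

Lemma sumEV (F : finType) (G : F -> int) :
  \sum_(k < #|F|) G (enum_val k) = \sum_y G y.
Proof.
rewrite (reindex (@enum_val F F)) //; apply: onW_bij; exact: enum_val_bij.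
Qed.

Lemma sq0 (F : finFieldType) (gamma : F) :
  (#|F|.-1).-primitive_root gamma -> (0 \in cycl_class gamma 0 2) = false.
Proof.
move=> pr; apply/negbTE; rewrite inE; apply/existsP => -[k /eqP e].
have g0 : gamma != 0.
  apply/negP => /eqP g0; have := prim_expr_order pr.
  by rewrite g0 expr0n; case: (#|F|.-1) (prim_order_gt0 pr) => // n _ /eqP; rewrite eq_sym oner_eq0.
by move: e; apply/eqP; rewrite eq_sym expf_neq0.
Qed.

Lemma sq_ns (F : finFieldType) (gamma c t : F) :
  (#|F|.-1).-primitive_root gamma -> ~~ odd #|F|.-1 ->
  c \in cycl_class gamma 1 2 -> t != 0 ->
  (c * t \in cycl_class gamma 0 2) = ~~ (t \in cycl_class gamma 0 2).
Proof.
move=> pr ev; rewrite inE => /existsP [k /eqP ->] t0.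
case: (nz_pow pr t0) => j ->.
rewrite -exprD !sqX // !oddD /=; by case: (odd k); case: (odd j).
Qed.

Lemma gamma_nz (F : finFieldType) (gamma : F) :
  (#|F|.-1).-primitive_root gamma -> gamma != 0.
Proof.
move=> pr; apply/negP => /eqP g0; have := prim_expr_order pr.
by rewrite g0 expr0n; case: (#|F|.-1) (prim_order_gt0 pr) => // n _ /eqP; rewrite eq_sym oner_eq0.
Qed.

Lemma cyc_nz (F : finFieldType) (gamma c : F) i e :
  (#|F|.-1).-primitive_root gamma -> c \in cycl_class gamma i e -> c != 0.
Proof.
move=> pr; rewrite inE => /existsP [k /eqP ->]; exact: expf_neq0 (gamma_nz pr).
Qed.

Lemma card_sq (F : finFieldType) (gamma c : F) (m : nat) :
  (#|F|.-1).-primitive_root gamma -> ~~ odd #|F|.-1 ->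
  c \in cycl_class gamma 1 2 -> #|F| = (2 * m + 1)%N ->
  \sum_(t : F) ((t \in cycl_class gamma 0 2)%:R : int) = m%:R.
Proof.
move=> pr ev hc hF.
have c0 := cyc_nz pr hc.
have e1 : \sum_(t : F) (((t \in cycl_class gamma 0 2)%:R : int) +
                         (c * t \in cycl_class gamma 0 2)%:R) = (#|F|.-1)%:R.
  rewrite (bigD1 0) //= mulr0 sq0 // add0r.
  rewrite (eq_bigr (fun _ => 1)); last first.
    by move=> t t0; rewrite sq_ns //; case: (_ \in _).
  by rewrite sumr_const cardC1.
have e2 : \sum_(t : F) ((c * t \in cycl_class gamma 0 2)%:R : int) =
          \sum_(t : F) ((t \in cycl_class gamma 0 2)%:R : int).
  by rewrite [RHS](reindex_inj (mulfI c0)).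
move: e1; rewrite big_split /= e2 hF.
set X := \sum_(t : F) _.
rewrite addn1 /= => h.
have : X + X = m%:R + m%:R by rewrite h -natrD addnn -mul2n.
lia.
Qed.

Lemma prod_entry (F : finFieldType) (gamma s t : F) i j :
  s != 0 ->
  (Cmat gamma 2 s *m Cmat gamma 2 t) i j =
  \sum_(w : F) (((w \in cycl_class gamma 0 2)%:R : int) *
     (s^-1 * (enum_val i - s * t * enum_val j - w) \in cycl_class gamma 0 2)%:R).
Proof.
move=> s0; rewrite !mxE.
under eq_bigr do rewrite !mxE.
rewrite (sumEV (fun y => ((enum_val i - s * y \in cycl_class gamma 0 2)%:R : int) *
                           (y - t * enum_val j \in cycl_class gamma 0 2)%:R)).
have hinj : injective (fun w : F => s^-1 * (enum_val i - w)).
  move=> w1 w2 /= /(mulfI (invr_neq0 s0)) /addrI; exact: oppr_inj.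
rewrite (reindex_inj hinj); apply: eq_bigr => w _ /=.
have -> : enum_val i - s * (s^-1 * (enum_val i - w)) = w by field.
have -> : s^-1 * (enum_val i - w) - t * enum_val j =
          s^-1 * (enum_val i - s * t * enum_val j - w) by field.
by [].
Qed.

Lemma key (F : finFieldType) (gamma c : F) (m : nat) (d : F) :
  (#|F|.-1).-primitive_root gamma -> ~~ odd #|F|.-1 ->
  c \in cycl_class gamma 1 2 -> #|F| = (2 * m + 1)%N ->
  \sum_(w : F) (((w \in cycl_class gamma 0 2)%:R : int) *
                  (d - w \in cycl_class gamma 0 2)%:R) +
  \sum_(w : F) (((w \in cycl_class gamma 0 2)%:R : int) *
                  (c * (d - w) \in cycl_class gamma 0 2)%:R)
  = m%:R - (d \in cycl_class gamma 0 2)%:R.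
Proof.
move=> pr ev hc hF.
rewrite -big_split /= -(card_sq pr ev hc hF) (bigD1 d) //= [in RHS](bigD1 d) //=.
rewrite subrr mulr0 sq0 // !mulr0 !add0r addrAC subrr add0r.

apply: eq_bigr => w wd.
rewrite -mulrDr sq_ns //; last by rewrite subr_eq0 eq_sym.
by case: (d - w \in _); rewrite ?mulr1 ?addr0 ?add0r ?mulr1.
Qed.

Lemma blk (F : finFieldType) (gamma t s' t' c : F) (m : nat) i j :
  (#|F|.-1).-primitive_root gamma -> ~~ odd #|F|.-1 ->
  c \in cycl_class gamma 1 2 -> #|F| = (2 * m + 1)%N ->
  s' != 0 -> s'^-1 = c -> s' * t' = t ->
  (Cmat gamma 2 1 *m Cmat gamma 2 t + Cmat gamma 2 s' *m Cmat gamma 2 t') i j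
  = m%:R - (enum_val i - t * enum_val j \in cycl_class gamma 0 2)%:R.
Proof.
move=> pr ev hc hF s0 hs ht.
rewrite [LHS]mxE !prod_entry ?oner_neq0 // invr1 mul1r ht hs.
under eq_bigr do rewrite mul1r.
exact: key.
Qed.

Lemma rowsum (F : finFieldType) (gamma s c : F) (m : nat) i (j : 'I_#|F|) :
  (#|F|.-1).-primitive_root gamma -> ~~ odd #|F|.-1 ->
  c \in cycl_class gamma 1 2 -> #|F| = (2 * m + 1)%N -> s != 0 ->
  (Cmat gamma 2 s *m const_mx 1) i j = m%:R.
Proof.
move=> pr ev hc hF s0; rewrite !mxE.
under eq_bigr do rewrite !mxE mulr1.
rewrite (sumEV (fun y => ((enum_val i - s * y \in cycl_class gamma 0 2)%:R : int))).
have hinj : injective (fun w : F => s^-1 * (enum_val i - w)).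
  move=> w1 w2 /= /(mulfI (invr_neq0 s0)) /addrI; exact: oppr_inj.
rewrite (reindex_inj hinj) -(card_sq pr ev hc hF); apply: eq_bigr => w _ /=.
have -> : enum_val i - s * (s^-1 * (enum_val i - w)) = w by field.
by [].
Qed.

Lemma colsum (F : finFieldType) (gamma s c : F) (m : nat) (i : 'I_#|F|) j :
  (#|F|.-1).-primitive_root gamma -> ~~ odd #|F|.-1 ->
  c \in cycl_class gamma 1 2 -> #|F| = (2 * m + 1)%N ->
  (const_mx 1 *m Cmat gamma 2 s) i j = m%:R.
Proof.
move=> pr ev hc hF; rewrite !mxE.
under eq_bigr do rewrite !mxE mul1r.
rewrite (sumEV (fun y => ((y - s * enum_val j \in cycl_class gamma 0 2)%:R : int))).
have hinj : injective (fun w : F => w + s * enum_val j) by move=> w1 w2 /= /addIr.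
rewrite (reindex_inj hinj) -(card_sq pr ev hc hF); apply: eq_bigr => w _ /=.
by rewrite addrK.
Qed.

Lemma const_block (R : nmodType) n1 n2 (x : R) :
  const_mx x = block_mx (const_mx x) (const_mx x) (const_mx x) (const_mx x)
    :> 'M[R]_(n1 + n2, n1 + n2).
Proof.
apply/matrixP => i j; rewrite -(splitK i) -(splitK j).
case: (split i) => k; case: (split j) => l;
  by rewrite ?block_mxEul ?block_mxEur ?block_mxEdl ?block_mxEdr !mxE.
Qed.
Unset Implicit Arguments.

Theorem mainTheorem8 (F : finFieldType) (gamma : F) (m : nat) (a b : F) :
  (#|F|.-1).-primitive_root gamma ->
  (#|F| %% 4 = 3)%N ->
  #|F| = (2 * m + 1)%N ->
  a \in cycl_class gamma 1 2 -> b \in cycl_class gamma 1 2 ->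
  a * b = 1 ->
  is_dsrg (block_mx (Cmat gamma 2 1) (Cmat gamma 2 a)
                    (Cmat gamma 2 b) (Cmat gamma 2 1))
          (2 * (2 * m + 1)) (2 * m) m m.-1 m.
Proof.
move=> pr h4 hF ha hb hab.
have ev : ~~ odd #|F|.-1 by rewrite hF addn1 /= oddM.
have m0 : (0 < m)%N by move: h4; rewrite hF; lia.
have a0 := cyc_nz pr ha; have b0 := cyc_nz pr hb.
have hba : b * a = 1 by rewrite mulrC.
have ainv : a^-1 = b by apply: (mulfI a0); rewrite hab mulfV.
have binv : b^-1 = a by apply: (mulfI b0); rewrite hba mulfV.
have hm1 : (m.-1)%:R = m%:R - 1 :> int.
  by rewrite -[in RHS](prednK m0) -addn1 natrD addrK.
have Cent : forall s (i j : 'I_#|F|),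
    Cmat gamma 2 s i j = (enum_val i - s * enum_val j \in cycl_class gamma 0 2)%:R.
  by move=> s i j; rewrite mxE.
split.
- by rewrite hF; lia.
- move=> i j; rewrite -(splitK i) -(splitK j).
  case: (split i) => k; case: (split j) => l;
    rewrite ?block_mxEul ?block_mxEur ?block_mxEdl ?block_mxEdr Cent;
    by case: (_ \in _); [right|left].
- move=> i; rewrite -(splitK i); case: (split i) => k;
    rewrite ?block_mxEul ?block_mxEdr Cent mul1r subrr sq0 //.
- rewrite mulmx_block const_block (scalar_mx_block _ _ (m%:R)) (scalar_mx_block _ _ 1).
  rewrite !scale_block_mx !opp_block_mx !add_block_mx !scale_block_mx !add_block_mx.
  congr block_mx; apply/matrixP => i j.
  + rewrite (blk i j pr ev hb hF a0 ainv hab) !mxE.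
    case: (eqVneq i j) => [<-|ne]; rewrite ?eqxx ?(negbTE ne) ?mul1r ?subrr ?sq0 //=;
      try case: (_ \in _); rewrite hm1 /=; lia.
  + rewrite (blk i j pr ev hb hF a0 ainv (mulr1 a)) !mxE.
    case: (eqVneq i j) => [<-|ne]; rewrite ?eqxx ?(negbTE ne) ?mul1r ?subrr ?sq0 //=;
      try case: (_ \in _); rewrite hm1 /=; lia.
  + rewrite addrC (blk i j pr ev ha hF b0 binv (mulr1 b)) !mxE.
    case: (eqVneq i j) => [<-|ne]; rewrite ?eqxx ?(negbTE ne) ?mul1r ?subrr ?sq0 //=;
      try case: (_ \in _); rewrite hm1 /=; lia.
  + rewrite addrC (blk i j pr ev ha hF b0 binv hba) !mxE.
    case: (eqVneq i j) => [<-|ne]; rewrite ?eqxx ?(negbTE ne) ?mul1r ?subrr ?sq0 //=;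
      try case: (_ \in _); rewrite hm1 /=; lia.
- rewrite !(@const_block _ #|F| #|F| 1) !mulmx_block !scale_block_mx; split;
  congr block_mx; apply/matrixP => i j; rewrite [LHS]mxE.
  all: try (rewrite !(rowsum _ _ pr ev hb hF) ?oner_neq0 // !mxE mulr1; lia).
  all: rewrite !(colsum _ _ _ pr ev hb hF) !mxE mulr1; lia.
Qed.
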